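(* For any causal encoding policy $\mathbb{P}_E$ and any $K\in\mathbb{N}_{+}$, with $\hat x(k)=\mathbb{E}[x(k)\mid a(0:k)]$, $$\frac1{K\tau}\sum_{k=0}^{K-1}\mathbb{E}[\ell(a(k))]\ \ge\ \frac1\tau\,\theta^{-1}\Big(\frac1K I\big(x(0:K-1);\hat x(0:K-1)\big)\Big).$$ Here $I$ denotes mutual information in bits.
   Context: Standing assumptions: $A\in\mathbb{R}^{n\times n}$ is Hurwitz, $BB^\top\succ0$, and $\Sigma_0\succ0$. Source: $dx_t=Ax_t\,dt+B\,dw_t$, with $x_0\sim\mathcal{N}(0,\Sigma_0)$ and $w$ a standard $n$-dimensional Brownian motion. Fix $\tau>0$ and let $x(k)=x_{k\tau}$. Encoding policies: $\{0,1\}^*$ is the set of finite binary strings, including the empty string $\emptyset$; $\ell(a)$ is the length of $a$, with $\ell(\emptyset)=0$. A causal encoding policy $\mathbb{P}_E$ is a sequence of Borel stochastic kernels $\mathbb{P}[a(k)\mid a(0:k-1),x(0:k)]$, $k\in\mathbb{N}_0$, with $a(k)\in\{0,1\}^*$. The function $\theta$: $\theta:[0,\infty)\to[0,\infty)$ is $\theta(x)=x+(1+x)\log_2(1+x)-x\log_2x$, with $0\log0=0$. It is strictly increasing and concave, with inverse $\theta^{-1}$. *)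

(* Defs.v *)
From HB Require Import structures.
From mathcomp Require Import all_boot all_order all_algebra.
From mathcomp Require Import all_classical all_reals all_analysis.
Import Order.TTheory GRing.Theory Num.Theory.
Import numFieldNormedType.Exports.

Set Implicit Arguments.
Unset Strict Implicit.
Unset Printing Implicit Defensive.

Local Open Scope classical_set_scope.
Local Open Scope ring_scope.

Section Defs.
Variable R : realType.

Definition expm (n : nat) (M : 'M[R]_n) : 'M[R]_n :=
  \matrix_(i, j) limn (fun N : nat => \sum_(k < N) (M ^+ k) i j / (k`!)%:R).

(* A is Hurwitz: every (complex) eigenvalue a + i b of A has negative real
   part.  Written over the reals: A (v + i w) = (a + i b) (v + i w) with
   (v, w) <> (0, 0), i.e.  A v = a v - b w,  A w = b v + a w. *)
Definition Hurwitz (n : nat) (A : 'M[R]_n) : Prop :=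
  forall (a b : R) (v w : 'cV[R]_n), (v != 0) || (w != 0) ->
    A *m v = a *: v - b *: w -> A *m w = b *: v + a *: w -> a < 0.

Definition posdef (n : nat) (M : 'M[R]_n) : Prop :=
  M^T = M /\ forall v : 'rV[R]_n, v != 0 -> 0 < (v *m M *m v^T) 0 0.

Definition mx_boxes (p q : nat) : set (set 'M[R]_(p, q)) :=
  [set B | exists a b : 'M[R]_(p, q),
     B = [set M : 'M[R]_(p, q) | forall i j, a i j < M i j <= b i j]].

Definition mx_borel (p q : nat) : set (set 'M[R]_(p, q)) := <<s @mx_boxes p q>>.

Definition mx_borel_fun (p q : nat) (f : 'M[R]_(p, q) -> R) : Prop :=
  forall c : R, mx_borel (f @^-1` `]-oo, c]).

Definition Phi (n : nat) (A : 'M[R]_n) (tau : R) : 'M[R]_n := expm (tau *: A).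

Definition Wnoise (n : nat) (A B : 'M[R]_n) (tau : R) : 'M[R]_n :=
  \matrix_(i, j) Rintegral lebesgue_measure `[0, tau]
     (fun s => (expm (s *: A) *m (B *m B^T) *m (expm (s *: A))^T) i j).

(* Sig k = Cov(x(k)) = Sigma(k tau). *)
Fixpoint Sig (n : nat) (A B Sigma0 : 'M[R]_n) (tau : R) (k : nat) : 'M[R]_n :=
  match k with
  | 0 => Sigma0
  | k'.+1 => Phi A tau *m Sig A B Sigma0 tau k' *m (Phi A tau)^T + Wnoise A B tau
  end.

(* Cross covariance E[x(j) x(k)^T]. *)
Definition covblk (n : nat) (A B Sigma0 : 'M[R]_n) (tau : R) (j k : nat)
  : 'M[R]_n :=
  if (j <= k)%N then Sig A B Sigma0 tau j *m ((Phi A tau)^T) ^+ (k - j)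
  else (Phi A tau) ^+ (j - k) *m Sig A B Sigma0 tau k.

Section Prob.
Context (d : measure_display) (T : measurableType d) (P : probability T R).

(* x j i w = i-th coordinate of x(j) = x_{j tau} at outcome w. *)
Definition Xpast (n : nat) (x : nat -> 'I_n -> T -> R) (k : nat) (w : T)
  : 'M[R]_(k.+1, n) := \matrix_(j < k.+1, i < n) x j i w.

Definition Xblock (n K : nat) (x : nat -> 'I_n -> T -> R) (w : T)
  : 'M[R]_(K, n) := \matrix_(j < K, i < n) x j i w.

(* (x(k))_k is the sampled process x_{k tau} of dx = Ax dt + B dw,
   x_0 ~ N(0, Sigma0): every finite block (x(0),...,x(m)) is a centered
   Gaussian vector with covariance blocks covblk j k, expressed through its
   characteristic function. *)
Definition sampled_source (n : nat) (A B Sigma0 : 'M[R]_n) (tau : R)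
  (x : nat -> 'I_n -> T -> R) : Prop :=
  (forall k i, measurable_fun setT (x k i)) /\
  forall (m : nat) (C : 'M[R]_(m.+1, n)),
    let lin w := \sum_(j < m.+1) \sum_(i < n) C j i * x j i w in
    let qf := \sum_(j < m.+1) \sum_(k < m.+1)
                (row j C *m covblk A B Sigma0 tau j k *m (row k C)^T) 0 0 in
    (\int[P]_w (cos (lin w))%:E = (expR (- qf / 2))%:E)%E /\
    (\int[P]_w (sin (lin w))%:E = 0)%E.

(* Causal encoding policy: q k prev X s is the probability of emitting
   a(k) = s given a(0:k-1) = prev and x(0:k) = X (rows of X = times);
   Borel stochastic kernels on {0,1}^*. *)
Definition policy (n : nat)
  (q : forall k : nat, seq (seq bool) -> 'M[R]_(k.+1, n) -> seq bool -> R) : Prop :=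
  (forall k prev X s, 0 <= q k prev X s) /\
  (forall k prev X, (\esum_(s in [set: seq bool]) (q k prev X s)%:E = 1)%E) /\
  (forall k prev s, mx_borel_fun (fun X => q k prev X s)).

(* The codewords a(k) are generated from the source by the policy q:
   joint law of (a(0:m), x(0:N)) for all m <= N. *)
Definition generated_by (n : nat) (x : nat -> 'I_n -> T -> R)
  (a : nat -> T -> seq bool)
  (q : forall k : nat, seq (seq bool) -> 'M[R]_(k.+1, n) -> seq bool -> R) : Prop :=
  (forall k s, measurable (a k @^-1` [set s])) /\
  forall (m N : nat) (s : nat -> seq bool) (E : set 'M[R]_(N.+1, n)),
    (m <= N)%N -> mx_borel E ->
    P [set w | (forall j, (j <= m)%N -> a j w = s j) /\ E (Xpast x N w)] =
    (\int[P]_(w in Xpast x N @^-1` E)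
        (\prod_(k < m.+1) q k [seq s j | j <- iota 0 k] (Xpast x k w) (s k))%:E)%E.

Definition exp_len (a : nat -> T -> seq bool) (k : nat) : \bar R :=
  (\int[P]_w ((size (a k w))%:R)%:E)%E.

(* Conditional expectation xhat(k) = E[x(k) | a(0:k)]; since a(0:k) takes
   countably many values this is the elementary conditional expectation on
   the atoms {a(0:k) = a(0:k)(w)} (set to 0 on null atoms). *)
Definition past_event (a : nat -> T -> seq bool) (k : nat) (w : T) : set T :=
  [set w' | forall j, (j <= k)%N -> a j w' = a j w].

Definition xhat (n : nat) (x : nat -> 'I_n -> T -> R) (a : nat -> T -> seq bool)
  (k : nat) (w : T) (i : 'I_n) : R :=
  let Ev := past_event a k w in
  if (0 < P Ev)%E then fine (\int[P]_(w' in Ev) (x k i w')%:E)%E / fine (P Ev)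
  else 0.

Definition Xhatblock (n K : nat) (x : nat -> 'I_n -> T -> R)
  (a : nat -> T -> seq bool) (w : T) : 'M[R]_(K, n) :=
  \matrix_(j < K, i < n) xhat x a j w i.

Definition log2 (y : R) : R := ln y / ln 2.

Definition mx_partition (p q m : nat) (E : 'I_m -> set 'M[R]_(p, q)) : Prop :=
  (forall i, mx_borel (E i)) /\
  (forall i j, i != j -> E i `&` E j = set0) /\
  \bigcup_(i in [set: 'I_m]) E i = [set: 'M[R]_(p, q)].

Definition mi_term (pxy px py : R) : R :=
  if pxy == 0 then 0 else pxy * log2 (pxy / (px * py)).

(* General (Dobrushin / Gelfand-Yaglom-Perez) mutual information: supremum
   over finite Borel partitions of the discrete mutual informations. *)
Definition mutual_info (p1 q1 p2 q2 : nat) (X : T -> 'M[R]_(p1, q1))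
  (Y : T -> 'M[R]_(p2, q2)) : \bar R :=
  ereal_sup [set z | exists (m1 m2 : nat) (E : 'I_m1 -> set 'M[R]_(p1, q1))
      (F : 'I_m2 -> set 'M[R]_(p2, q2)),
      mx_partition E /\ mx_partition F /\
      z = (\sum_(i < m1) \sum_(j < m2)
             mi_term (fine (P (X @^-1` E i `&` Y @^-1` F j)))
                     (fine (P (X @^-1` E i))) (fine (P (Y @^-1` F j))))%:E].

End Prob.

Definition xlog2x (y : R) : R := if y == 0 then 0 else y * log2 y.

Definition theta (y : R) : R := y + (1 + y) * log2 (1 + y) - xlog2x y.

Definition theta_inv (z : R) : R := xget 0 [set y | 0 <= y /\ theta y = z].

Definition theta_inv_e (z : \bar R) : \bar R :=
  match z with
  | EFin r => (theta_inv r)%:E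
  | +oo%E => +oo%E
  | -oo%E => 0%E
  end.

End Defs.

(* Main.v *)
Require Import Defs.
From HB Require Import structures.
From mathcomp Require Import all_boot all_order all_algebra.
From mathcomp Require Import all_classical all_reals all_analysis.
From mathcomp Require Import measurable_realfun ring lra zify.
Import Order.TTheory GRing.Theory Num.Theory.
Local Open Scope classical_set_scope.
Local Open Scope ring_scope.


Section Meas.
Context {R : realType} {d : measure_display} {T : measurableType d}.

Lemma preim_count {C : countType} (x0 : C) (f : T -> C) :
  (forall c, measurable (f @^-1` [set c])) -> forall U, measurable (f @^-1` U).
Proof.
move=> hf U.
have -> : f @^-1` U = \bigcup_(n in [set n | exists c, unpickle n = Some c /\ U c])
    f @^-1` [set odflt x0 (unpickle n)].
  apply/seteqP; split => w /=.
    move=> Uw; exists (pickle (f w)); first by exists (f w); rewrite pickleK.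
    by rewrite /= pickleK.
  by move=> [n [c [hn Uc]]]; rewrite /= hn /= => ->.
by apply: bigcup_measurable => k _; exact: hf.
Qed.

Lemma mfun_count {C : countType} (x0 : C) (f : T -> C) (g : C -> \bar R) :
  (forall c, measurable (f @^-1` [set c])) ->
  measurable_fun setT (g \o f).
Proof.
move=> hf _ B mB; rewrite setTI.
rewrite (_ : (g \o f) @^-1` B = f @^-1` (g @^-1` B)) //. exact: (preim_count x0 f hf).
Qed.

Definition tp (a : nat -> T -> seq bool) (K : nat) (w : T) : seq (seq bool) :=
  [seq a k w | k <- iota 0 K].

Lemma tp_single (a : nat -> T -> seq bool) K : (0 < K)%N ->
  (forall k s, measurable (a k @^-1` [set s])) ->
  forall t, measurable (tp a K @^-1` [set t]).
Proof.
move=> K0 ma t.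
have [st|st] := eqVneq (size t) K; last first.
  rewrite (_ : _ @^-1` _ = set0) //; apply/seteqP; split => w //= e.
  by move: st; rewrite -e /tp size_map size_iota eqxx.
have -> : tp a K @^-1` [set t] =
    \bigcap_(k in [set k | (k < K)%N]) a k @^-1` [set nth [::] t k].
  apply/seteqP; split => w /=.
    move=> <- k /= kK; by rewrite /tp (nth_map 0%N) ?size_iota // nth_iota.
  move=> H; apply: (@eq_from_nth _ [::]); first by rewrite /tp size_map size_iota st.
  move=> k; rewrite /tp size_map size_iota => kK.
  by rewrite (nth_map 0%N) ?size_iota // nth_iota // add0n; apply: H.
apply: bigcap_measurable; first by exists 0%N.
move=> k _; exact: ma.
Qed.

Lemma Xblock_meas n K (x : nat -> 'I_n -> T -> R) :
  (forall k i, measurable_fun setT (x k i)) ->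
  forall E, mx_borel E -> measurable (Xblock K x @^-1` E).
Proof.
move=> mx E hE.
suff : image_set_system setT (Xblock K x) measurable E
  by rewrite /image_set_system /= setTI.
move: E hE; apply: smallest_sub.
  apply: sigma_algebra_image; exact: sigma_algebra_measurable.
move=> _ [a [b ->]]; rewrite /image_set_system /= setTI.
have -> : Xblock K x @^-1` [set M | forall i j, a i j < M i j <= b i j] =
  \bigcap_(p in [set: 'I_K * 'I_n]) (x p.1 p.2 @^-1` `]a p.1 p.2, b p.1 p.2]).
  apply/seteqP; split => w /=.
    move=> H [i j] _ /=; have := H i j; rewrite /Xblock mxE /= => hij.
    by rewrite in_itv /= hij.
  move=> H i j; have := H (i, j) I; rewrite /Xblock mxE /= in_itv /=.
  by [].
apply: fin_bigcap_measurable; first exact: finite_finset.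
move=> p _; have := mx p.1 p.2 measurableT _ (measurable_itv `]a p.1 p.2, b p.1 p.2]).
by rewrite setTI.
Qed.

End Meas.

Lemma theta_eq (R : realType) (y : R) : 0 < y ->
  theta y = - log2 (1 - y / (1 + y)) + y * (1 - log2 (y / (1 + y))).
Proof.
move=> y0.
have y1 : 0 < 1 + y by lra.
have e1 : 1 - y / (1 + y) = (1 + y)^-1.
  by field; rewrite gt_eqF.
rewrite e1 /log2 lnV ?posrE // ln_div ?posrE //.
rewrite /theta /xlog2x gt_eqF // /log2.
field.
apply/negP => /eqP h.
have : 0 < ln (2 : R) by apply: ln_gt0; lra.
by rewrite h ltxx.
Qed.

Section Comb.
Context {R : realFieldType}.
Variable rho : R.
Hypothesis rho0 : 0 <= rho.
Hypothesis rho1 : rho <= 1.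

Definition cw (s : seq bool) : R := (1 - rho) * (rho / 2) ^+ size s.
Definition Wt (t : seq (seq bool)) : R := \prod_(s <- t) cw s.

Lemma cw_ge0 s : 0 <= cw s.
Proof. rewrite /cw; apply: mulr_ge0; first by rewrite subr_ge0. by apply: exprn_ge0; apply: divr_ge0. Qed.

Lemma Wt_ge0 t : 0 <= Wt t.
Proof. rewrite /Wt; apply: prodr_ge0 => s _; exact: cw_ge0. Qed.

Definition pE (t : seq (seq bool)) : bool := if t is [::] :: _ then true else false.
Definition p0 (t : seq (seq bool)) : bool := if t is (false :: _) :: _ then true else false.
Definition p1 (t : seq (seq bool)) : bool := if t is (true :: _) :: _ then true else false.
Definition g0 (t : seq (seq bool)) : seq (seq bool) :=
  if t is (_ :: s') :: r then s' :: r else t.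

Lemma sum_nil (S : seq (seq (seq bool))) : uniq S ->
  (forall t, t \in S -> size t = 0%N) -> \sum_(t <- S) Wt t <= 1.
Proof.
move=> uS HS.
have sub : {subset S <= [:: [::]]}.
  move=> u /HS su; rewrite inE; apply/eqP; exact/size0nil.
have := uniq_leq_size uS sub; case: S {uS HS} sub => [|t [|? ?]] //= sub _.
  by rewrite big_nil ler01.
rewrite big_cons big_nil addr0.
have := sub t (mem_head _ _); rewrite inE => /eqP ->.
by rewrite /Wt big_nil.
Qed.

Lemma sum_map_scale (S' : seq (seq (seq bool))) f c :
  (forall t, t \in S' -> Wt t = c * Wt (f t)) ->
  \sum_(t <- S') Wt t = c * \sum_(r <- map f S') Wt r.
Proof.
move=> H; rewrite big_map mulr_sumr; apply: eq_big_seq => t /H //.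
Qed.

Lemma split3 (S : seq (seq (seq bool))) :
  (forall t, t \in S -> [|| pE t, p0 t | p1 t]) ->
  \sum_(t <- S) Wt t = \sum_(t <- seq.filter pE S) Wt t +
     \sum_(t <- seq.filter p0 S) Wt t + \sum_(t <- seq.filter p1 S) Wt t.
Proof.
elim: S => [|t S IH] H; first by rewrite !big_nil !addr0.
have IH' := IH (fun u uS => H u (@mem_behead _ (t :: S) u uS)).
have := H t (mem_head _ _).
rewrite big_cons IH'.
clear H IH IH'; case: t => [|[|[] ?] ?] //= _; rewrite !big_cons; ring.
Qed.

Lemma Wt_le1 N : forall K (S : seq (seq (seq bool))), uniq S ->
  (forall t, t \in S -> size t = K /\ (K + sumn (map size t) <= N)%N) ->
  \sum_(t <- S) Wt t <= 1.
Proof.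
elim: N => [|N IH] K S uS HS.
  apply: sum_nil => // t /HS [-> ]; rewrite leqn0 addn_eq0 => /andP[/eqP -> _] //.
case: K HS => [|K] HS.
  by apply: sum_nil => // t /HS [-> ].
rewrite split3; last first.
  move=> t /HS [+ _]; by case: t => [|[|[] ?] ?].
set SE := seq.filter _ S; set S0 := seq.filter _ S; set S1 := seq.filter _ S.
have memS (P : pred (seq (seq bool))) t : t \in seq.filter P S -> P t /\ t \in S.
  by rewrite mem_filter => /andP[].
have hE : \sum_(t <- SE) Wt t = (1 - rho) * \sum_(r <- map behead SE) Wt r.
  apply: sum_map_scale => t /memS [].
  case: t => [|[|b s'] r] // _ _.
  by rewrite /Wt big_cons /cw /= expr0 mulr1.
have h0 : \sum_(t <- S0) Wt t = (rho / 2) * \sum_(r <- map g0 S0) Wt r.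
  apply: sum_map_scale => t /memS [].
  case: t => [|[|[] s'] r] // _ _.
  by rewrite /Wt !big_cons /cw /= exprS; ring.
have h1 : \sum_(t <- S1) Wt t = (rho / 2) * \sum_(r <- map g0 S1) Wt r.
  apply: sum_map_scale => t /memS [].
  case: t => [|[|[] s'] r] // _ _.
  by rewrite /Wt !big_cons /cw /= exprS; ring.
have uE : \sum_(r <- map behead SE) Wt r <= 1.
  apply: (IH K).
    rewrite map_inj_in_uniq ?filter_uniq //.
    move=> t1 t2 /memS [+ _] /memS [+ _].
    by case: t1 => [|[|? ?] ?] //; case: t2 => [|[|? ?] ?] //= _ _ ->.
  move=> r /mapP [t /memS [+ /HS [st ht]] ->].
  case: t st ht => [|[|b s'] r'] //= st ht _; split; lia.
have u0 : \sum_(r <- map g0 S0) Wt r <= 1.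
  apply: (IH K.+1).
    rewrite map_inj_in_uniq ?filter_uniq //.
    move=> t1 t2 /memS [+ _] /memS [+ _].
    by case: t1 => [|[|[] ?] ?] //; case: t2 => [|[|[] ?] ?] //= _ _ [-> ->].
  move=> r /mapP [t /memS [+ /HS [st ht]] ->].
  case: t st ht => [|[|[] s'] r'] //= st ht _; split => /=; lia.
have u1 : \sum_(r <- map g0 S1) Wt r <= 1.
  apply: (IH K.+1).
    rewrite map_inj_in_uniq ?filter_uniq //.
    move=> t1 t2 /memS [+ _] /memS [+ _].
    by case: t1 => [|[|[] ?] ?] //; case: t2 => [|[|[] ?] ?] //= _ _ [-> ->].
  move=> r /mapP [t /memS [+ /HS [st ht]] ->].
  case: t st ht => [|[|[] s'] r'] //= st ht _; split => /=; lia.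
rewrite hE h0 h1.
move: uE u0 u1.
set a := \sum_(r <- map behead SE) Wt r.
set b := \sum_(r <- map g0 S0) Wt r.
set c := \sum_(r <- map g0 S1) Wt r.
move=> uE u0 u1.
have ha : (1 - rho) * a <= 1 - rho.
  by rewrite ler_piMr // subr_ge0.
have hb : (rho / 2) * b <= rho / 2 by rewrite ler_piMr // divr_ge0.
have hc : (rho / 2) * c <= rho / 2 by rewrite ler_piMr // divr_ge0.
apply: le_trans (lerD (lerD ha hb) hc) _.
by rewrite -addrA -splitr subrK.
Qed.
End Comb.

Section TpY.
Context {R : realType} {d : measure_display} {T : measurableType d} (P : probability T R).

Lemma tpY n K (x : nat -> 'I_n -> T -> R) (a : nat -> T -> seq bool) w w' :
  tp a K w = tp a K w' -> Xhatblock P K x a w = Xhatblock P K x a w'.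
Proof.
move=> e.
have ea : forall k, (k < K)%N -> a k w = a k w'.
  move=> k kK; have := congr1 (fun t => nth [::] t k) e.
  by rewrite /tp !(nth_map 0%N) ?size_iota // nth_iota.
apply/matrixP => j i; rewrite !mxE /xhat.
have -> : past_event a j w = past_event a j w'; last by [].
have lt k : (k <= j)%N -> (k < K)%N by move=> kj; exact: leq_ltn_trans kj (ltn_ord j).
apply/seteqP; split => v /= H k kj; rewrite H //.
  exact/ea/lt.
exact/esym/ea/lt.
Qed.
End TpY.


Section Main.
Context {R : realType} {d : measure_display} {T : measurableType d} (P : probability T R).

Definition c0 (rho : R) := - log2 (1 - rho).
Definition c1 (rho : R) := 1 - log2 rho.

Lemma ln2_gt0 : 0 < ln (2 : R).
Proof. by apply: ln_gt0; lra. Qed.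

Lemma log2_le (u v : R) : 0 < u -> u <= v -> log2 u <= log2 v.
Proof.
move=> u0 uv; rewrite /log2 ler_pM2r ?invr_gt0 ?ln2_gt0 //.
by rewrite ler_ln ?posrE //; apply: lt_le_trans uv.
Qed.

Lemma ln_le_sub1 (y : R) : 0 < y -> ln y <= y - 1.
Proof.
move=> y0; have := expR_ge1Dx (ln y); rewrite lnK ?posrE //; lra.
Qed.

Lemma Wt_gt0 (rho : R) t : 0 < rho < 1 -> 0 < Wt rho t.
Proof.
move=> /andP[r0 r1]; rewrite /Wt; apply: prodr_gt0 => s _.
rewrite /cw; apply: mulr_gt0; first lra.
by apply: exprn_gt0; apply: divr_gt0.
Qed.

Lemma log2_Wt (rho : R) t : 0 < rho < 1 ->
  - log2 (Wt rho t) = (size t)%:R * c0 rho + (sumn (map size t))%:R * c1 rho.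
Proof.
move=> /andP[r0 r1]; elim: t => [|s t IH].
  by rewrite /Wt big_nil /log2 ln1 mul0r oppr0 !mul0r addr0.
have hW : Wt rho (s :: t) = cw rho s * Wt rho t by rewrite /Wt big_cons.
have cw0 : 0 < cw rho s.
  rewrite /cw; apply: mulr_gt0; first lra.
  by apply: exprn_gt0; apply: divr_gt0.
have Wt0 : 0 < Wt rho t by apply: Wt_gt0; rewrite r0 r1.
rewrite hW /log2 lnM ?posrE // mulrDl opprD.
have h1 : 0 < 1 - rho by rewrite subr_gt0.
have h2 : 0 < rho / 2 by apply: divr_gt0.
have h3 : 0 < (rho / 2) ^+ size s by apply: exprn_gt0.
rewrite -/(log2 (Wt rho t)) IH /cw lnM ?posrE //.
rewrite lnXn // ln_div ?posrE //.
rewrite /= natrD /c0 /c1 /log2.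
field. by rewrite gt_eqF // ln2_gt0.
Qed.

Lemma in_bigsetU (U : Type) m (G : 'I_m -> set U) w :
  (\big[setU/set0]_(i < m) G i) w <-> exists i, G i w.
Proof.
rewrite -bigcup_seq; split.
  by move=> [i _ Gi]; exists i.
by move=> [i Gi]; exists i => //=; exact: mem_index_enum.
Qed.

Lemma main_bound n K (hK : (0 < K)%N) (x : nat -> 'I_n -> T -> R)
  (a : nat -> T -> seq bool)
  (mx : forall k i, measurable_fun setT (x k i))
  (ma : forall k s, measurable (a k @^-1` [set s]))
  (rho : R) (r0 : 0 < rho) (r1 : rho < 1) :
  (mutual_info P (Xblock K x) (Xhatblock P K x a) <=
    (K%:R * c0 rho)%:E +
    (c1 rho)%:E * \int[P]_w ((sumn (map size (tp a K w)))%:R)%:E)%E.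
Proof.
apply/ereal_supP => _ [m1 [m2 [E [F [[mE [dE cE]] [[mF [dF cF]] ->]]]]]].
set X := Xblock K x. set Y := Xhatblock P K x a.
set L := fun w => sumn (map size (tp a K w)).
pose C j := Y @^-1` F j.
have CE j : C j = tp a K @^-1` (tp a K @` C j).
  apply/seteqP; split => w /=; first by move=> Cw; exists w.
  by move=> [w' Cw' e]; move: Cw'; rewrite /C /Y /= (tpY P n K x a w' w e).
have mC j : measurable (C j).
  rewrite CE; apply: (preim_count [::]); exact: tp_single.
have mB i : measurable (X @^-1` E i) by apply: Xblock_meas => //; exact: mE.
have finP A : measurable A -> (fine (P A))%:E = P A.
  by move=> mA; rewrite fineK // fin_num_measure.
have coverE (M : 'M[R]_(K, n)) : exists i, E i M.
  have : (\bigcup_(i in setT) E i) M by rewrite cE.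
  by case => i _ ?; exists i.
have coverF (M : 'M[R]_(K, n)) : exists j, F j M.
  have : (\bigcup_(j in setT) F j) M by rewrite cF.
  by case => j _ ?; exists j.
pose p i j := fine (P (X @^-1` E i `&` C j)).
pose q j := fine (P (C j)).
pose pm i := fine (P (X @^-1` E i)).
have mBC i j : measurable (X @^-1` E i `&` C j) by apply: measurableI.
have p_ge0 i j : 0 <= p i j by rewrite /p fine_ge0 // measure_ge0.
have q_ge0 j : 0 <= q j by rewrite /q fine_ge0 // measure_ge0.
have p_le_q i j : p i j <= q j.
  rewrite -lee_fin /p /q !finP //; apply: le_measure; rewrite ?inE //.
have p_le_pm i j : p i j <= pm i.
  rewrite -lee_fin /p /pm !finP //; apply: le_measure; rewrite ?inE //.
have sum_p j : \sum_(i < m1) p i j = q j.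
  suff h : ((\sum_(i < m1) p i j)%:E = (q j)%:E) by case: h.
  rewrite -sumEFin /q finP //.
  rewrite (eq_bigr (fun i => P (X @^-1` E i `&` C j))); last first.
    by move=> i _; rewrite /p finP.
  rewrite -measure_bigsetU_ord //.
    congr (P _); apply/seteqP; split => w.
      by move=> /in_bigsetU [i [_ Cw]].
    move=> Cw; apply/in_bigsetU; have [i Ei] := coverE (X w).
    by exists i.
  move=> i k _ _ [w [[Ei _] [Ek _]]].
  apply/eqP; apply: contraT => /dE h.
  by have : (E i `&` E k) (X w) by []; rewrite h.
have sum_q : \sum_(j < m2) q j = 1.
  suff h : ((\sum_(j < m2) q j)%:E = 1%:E) by case: h.
  rewrite -sumEFin.
  rewrite (eq_bigr (fun j => P (C j))); last by move=> j _; rewrite /q finP.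
  rewrite -measure_bigsetU_ord //.
    rewrite -(probability_setT P); congr (P _); apply/seteqP; split => w //.
    move=> _; apply/in_bigsetU; have [j Fj] := coverF (Y w).
    by exists j.
  move=> j k _ _ [w [Fj Fk]].
  apply/eqP; apply: contraT => /dF h.
  by have : (F j `&` F k) (Y w) by []; rewrite h.
have [t0 _] : (setT : set T) !=set0.
  apply/set0P/negP => /eqP h; have := probability_setT P; rewrite h measure0.
  by move=> [] /esym /eqP; rewrite oner_eq0.
have wit j : exists w, (exists w', C j w') ->
    C j w /\ (forall w', C j w' -> (L w <= L w')%N).
  case: (pselect (exists w', C j w')) => [[w0 Cw0]|N]; last by exists t0.
  have ex : exists m, `[< exists w, C j w /\ L w = m >].
    by exists (L w0); apply/asboolP; exists w0.
  case: (ex_minnP ex) => m /asboolP [w [Cw Lw]] hmin.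
  exists w => _; split => // w' Cw'; rewrite Lw; apply: hmin.
  by apply/asboolP; exists w'.
have [wj hwj] := choice wit.
pose ne j : bool := `[< exists w', C j w' >].
pose Q j := if ne j then Wt rho (tp a K (wj j)) else 0.
pose mj j := L (wj j).
pose ell j := K%:R * c0 rho + (mj j)%:R * c1 rho.
have rr : 0 < rho < 1 by rewrite r0 r1.
have sizetp w : size (tp a K w) = K by rewrite size_map size_iota.
have Qlog j : ne j -> - log2 (Q j) = ell j.
  by move=> nj; rewrite /Q nj log2_Wt // sizetp.
have Q_gt0 j : ne j -> 0 < Q j by move=> nj; rewrite /Q nj; exact: Wt_gt0.
have Q_ge0 j : 0 <= Q j.
  by rewrite /Q; case: ifP => // nj; apply/ltW/Wt_gt0.
have sumQ : \sum_(j < m2) Q j <= 1.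
  rewrite (bigID ne) /= [X in _ + X]big1 ?addr0; last first.
    by move=> j /negbTE nj; rewrite /Q nj.
  rewrite -big_filter.
  rewrite (eq_big_seq (fun j => Wt rho (tp a K (wj j)))); last first.
    by move=> j; rewrite mem_filter => /andP[nj _]; rewrite /Q nj.
  rewrite -(big_map (fun j => tp a K (wj j)) xpredT (Wt rho)).
  apply: (Wt_le1 rho (ltW r0) (ltW r1) (\sum_(j < m2) (K + L (wj j)))%N K).
    rewrite map_inj_in_uniq ?filter_uniq ?index_enum_uniq //.
    move=> j j'; rewrite !mem_filter => /andP[nj _] /andP[nj' _] e.
    have [Cj _] := hwj j (asboolW nj).
    have [Cj' _] := hwj j' (asboolW nj').
    have eY := tpY P n K x a _ _ e.
    apply/eqP; apply: contraT => /dF h.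
    have : (F j `&` F j') (Y (wj j)) by split => //; rewrite /Y eY.
    by rewrite h.
  move=> t /mapP [j _ ->]; split; first exact: sizetp.
  by rewrite (bigD1 j) //= leq_addr.
have l2 := @ln2_gt0.
have stepA i j : mi_term (p i j) (pm i) (q j) <= p i j * (- log2 (q j)).
  rewrite /mi_term; case: eqP => [->|/eqP pn0]; first by rewrite mul0r.
  have p0 : 0 < p i j by rewrite lt_def pn0 p_ge0.
  have pm0 : 0 < pm i := lt_le_trans p0 (p_le_pm i j).
  have q0 : 0 < q j := lt_le_trans p0 (p_le_q i j).
  apply: ler_wpM2l; first exact: ltW.
  have -> : - log2 (q j) = log2 (q j)^-1 by rewrite /log2 lnV ?posrE // mulNr.
  apply: log2_le; first by apply: divr_gt0 => //; apply: mulr_gt0.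
  rewrite invfM mulrA; apply: ler_piMl; first by rewrite invr_ge0 ltW.
  by rewrite ler_pdivrMr // mul1r.
have stepC j : q j * (- log2 (q j)) <= q j * ell j + (Q j - q j) / ln 2.
  case nj: (ne j); last first.
    have C0 : C j = set0.
      apply/seteqP; split => // w Cw; move: nj; rewrite /ne.
      by rewrite asboolT //; exists w.
    have q0 : q j = 0 by rewrite /q C0 measure0.
    by rewrite /Q nj q0 !mul0r subrr mul0r addr0.
  have Q0 := Q_gt0 j nj.
  rewrite -(Qlog j nj).
  case: (eqVneq (q j) 0) => [->|qn0].
    rewrite !mul0r add0r subr0; apply: divr_ge0; exact: ltW.
  have q0 : 0 < q j by rewrite lt_def qn0 q_ge0.
  have := ln_le_sub1 (Q j / q j) (divr_gt0 Q0 q0); rewrite ln_div ?posrE // => h.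
  have h2 : q j * (ln (Q j) - ln (q j)) <= Q j - q j.
    have e : q j * (Q j / q j - 1) = Q j - q j by field; rewrite gt_eqF.
    by have := ler_wpM2l (ltW q0) h; rewrite e.
  rewrite /log2 -subr_ge0.
  have -> : q j * - (ln (Q j) / ln 2) + (Q j - q j) / ln 2 - q j * - (ln (q j) / ln 2)
      = ((Q j - q j) - q j * (ln (Q j) - ln (q j))) / ln 2.
    by field; rewrite gt_eqF.
  by apply: divr_ge0; [rewrite subr_ge0 | exact: ltW].
have c1_ge0 : 0 <= c1 rho.
  rewrite /c1 subr_ge0 /log2; apply: le_trans (_ : 0 <= 1); last by [].
  apply: mulr_le0_ge0; first by apply/ltW/ln_lt0; rewrite r0 r1.
  by rewrite invr_ge0 ltW.
have real_bound : \sum_(i < m1) \sum_(j < m2) mi_term (p i j) (pm i) (q j)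
    <= K%:R * c0 rho + c1 rho * \sum_(j < m2) q j * (mj j)%:R.
  apply: le_trans (_ : \sum_(i < m1) \sum_(j < m2) p i j * (- log2 (q j)) <= _).
    apply: ler_sum => i _; apply: ler_sum => j _; exact: stepA.
  rewrite exchange_big /=.
  rewrite (eq_bigr (fun j => q j * (- log2 (q j)))); last first.
    by move=> j _; rewrite -mulr_suml sum_p.
  apply: le_trans (_ : \sum_(j < m2) (q j * ell j + (Q j - q j) / ln 2) <= _).
    apply: ler_sum => j _; exact: stepC.
  rewrite big_split /= -mulr_suml sumrB sum_q.
  have hneg : (\sum_(j < m2) Q j - 1) / ln 2 <= 0.
    by apply: mulr_le0_ge0; [rewrite subr_le0 | rewrite invr_ge0 ltW].
  have e : \sum_(j < m2) q j * ell j =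
      K%:R * c0 rho + c1 rho * \sum_(j < m2) q j * (mj j)%:R.
    rewrite (eq_bigr (fun j => K%:R * c0 rho * q j + c1 rho * (q j * (mj j)%:R)));
      last by move=> j _; rewrite /ell; ring.
    by rewrite big_split /= -!mulr_sumr sum_q mulr1.
  by rewrite e; apply: le_trans (lerD (lexx _) hneg) _; rewrite addr0.
have mL : measurable_fun setT (fun w => ((L w)%:R)%:E : \bar R).
  rewrite /L; exact: (mfun_count [::] (tp a K) (fun t => ((sumn (map size t))%:R)%:E)
    (tp_single a K hK ma)).
have mg j : measurable_fun setT
    (fun w => (((mj j)%:R)%:E * (\1_(C j) w)%:E)%E : \bar R).
  apply: measurable_funeM; apply/measurable_EFinP.
  exact: measurable_indic.
have g0 j w : (0 <= ((mj j)%:R)%:E * (\1_(C j) w)%:E)%E.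
  by apply: mule_ge0; rewrite lee_fin // indicE ler0n.
have termj j : ((q j * (mj j)%:R)%:E =
    \int[P]_w (((mj j)%:R)%:E * (\1_(C j) w)%:E))%E.
  rewrite ge0_integralZl_EFin //; last first.
    by apply/measurable_EFinP; exact: measurable_indic.
  by rewrite integral_indic // setIT /q mulrC EFinM finP.
have stepF : ((\sum_(j < m2) q j * (mj j)%:R)%:E <=
    \int[P]_w ((L w)%:R)%:E)%E.
  rewrite -sumEFin (eq_bigr _ (fun j _ => termj j)) -ge0_integral_sum //.
  apply: ge0_le_integral => //.
  - by move=> w _; apply: sume_ge0 => j _; exact: g0.
  - by apply: emeasurable_sum => j; exact: mg.
  move=> w _; have [j0 Fj0] := coverF (Y w).
  have Cj0 : C j0 w by [].
  rewrite (bigD1 j0) //= big1 ?adde0; last first.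
    move=> j nj; rewrite indicE memNset ?mule0 //.
    move=> Cjw; have := dF j j0 nj.
    by have : (F j `&` F j0) (Y w) by []; move=> + h; rewrite h.
  rewrite indicE mem_set // mule1 lee_fin ler_nat.
  have [_ hm] := hwj j0 (ex_intro _ w Cj0).
  exact: hm.
apply: (@le_trans _ _ ((K%:R * c0 rho + c1 rho * \sum_(j < m2) q j * (mj j)%:R)%:E)).
  by rewrite lee_fin; exact: real_bound.
rewrite EFinD EFinM; apply: leeD2l.
have c1E : (0 <= (c1 rho)%:E)%E by rewrite lee_fin.
exact: (lee_wpmul2l c1E stepF).
Qed.

End Main.


Theorem lemma3 (R : realType) (n : nat) (A B Sigma0 : 'M[R]_n) (tau : R)
  (hA : Hurwitz A) (hB : posdef (B *m B^T)) (hS : posdef Sigma0)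
  (htau : 0 < tau)
  (d : measure_display) (T : measurableType d) (P : probability T R)
  (x : nat -> 'I_n -> T -> R) (a : nat -> T -> seq bool)
  (q : forall k : nat, seq (seq bool) -> 'M[R]_(k.+1, n) -> seq bool -> R)
  (hx : sampled_source P A B Sigma0 tau x)
  (hq : policy q)
  (ha : generated_by P x a q)
  (K : nat) (hK : (0 < K)%N) :
  ((((K%:R * tau)^-1)%:E * \sum_(k < K) exp_len P a k) >=
   (tau^-1)%:E *
     theta_inv_e ((K%:R^-1)%:E *
       mutual_info P (Xblock K x) (Xhatblock P K x a)))%E.
Proof.
have mx := hx.1.
have ma := ha.1.
have Kpos : 0 < K%:R :> R by rewrite ltr0n.
have Ktau : 0 < (K%:R * tau)^-1 by rewrite invr_gt0 mulr_gt0.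
have mS k : measurable_fun setT (fun w => ((size (a k w))%:R)%:E : \bar R).
  exact: (mfun_count [::] (a k) (fun s => ((size s)%:R)%:E) (ma k)).
have intE : (\int[P]_w ((sumn (map size (tp a K w)))%:R)%:E =
    \sum_(k < K) exp_len P a k)%E.
  rewrite /exp_len -ge0_integral_sum //.
  apply: eq_integral => w _.
  rewrite sumEFin; congr (_%:E).
  rewrite /tp sumnE !big_map -natr_sum; congr (_%:R).
  by rewrite -(big_mkord xpredT (fun k => size (a k w))) /index_iota subn0.
set S := (\sum_(k < K) exp_len P a k)%E in intE *.
have S0 : (0 <= S)%E.
  by apply: sume_ge0 => k _; apply: integral_ge0 => w _; rewrite lee_fin.
have bnd := main_bound P n K hK x a mx ma.
move: (mutual_info _ _ _) bnd => MI bnd.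
case: S S0 intE => [s| |] // S0 intE; last first.
  by rewrite gt0_muley ?lte_fin // leey.
rewrite lee_fin in S0.
rewrite intE in bnd.
have hr : (1 / 2 : R) < 1 by lra.
have hr0 : 0 < (1 / 2 : R) by lra.
case: MI bnd => [r| |] bnd; last first.
- rewrite mulrNy gtr0_sg ?invr_gt0 // mul1e /= mule0 -EFinM lee_fin.
  by apply: mulr_ge0 => //; exact: ltW.
- by have := bnd _ hr0 hr; rewrite leye_eq -EFinM.
rewrite -!EFinM /= lee_fin.
rewrite /theta_inv; case: xgetP => [y _ [y0 thy]|_]; last first.
  rewrite mulr0; apply: mulr_ge0; [exact: ltW | exact: S0].
suff hy : y <= s / K%:R.
  have -> : (K%:R * tau)^-1 * s = tau^-1 * (s / K%:R).
    by field; rewrite !gt_eqF.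
  by apply: ler_wpM2l => //; rewrite invr_ge0 ltW.
case: (eqVneq y 0) => [->|yn0]; first by apply: divr_ge0 => //; exact: ltW.
have ypos : 0 < y by rewrite lt_def yn0 y0.
set rho := y / (1 + y).
have r0 : 0 < rho by apply: divr_gt0 => //; lra.
have r1 : rho < 1 by rewrite /rho ltr_pdivrMr; lra.
have := bnd _ r0 r1; rewrite -EFinM -EFinD lee_fin => hb.
have tE := @theta_eq R y ypos; rewrite -/rho thy in tE.
have c1pos : 0 < c1 rho.
  have l1 : ln rho < 0 by apply: ln_lt0; rewrite r0 r1.
  have l2 := @ln2_gt0 R.
  rewrite /c1 subr_gt0 /log2 ltr_pdivrMr //; lra.
have e : r = K%:R * c0 rho + K%:R * y * c1 rho.
  have -> : r = K%:R * (K%:R^-1 * r) by rewrite mulrA mulfV ?mul1r // gt_eqF.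
  by rewrite tE /c0 /c1; ring.
rewrite e in hb.
have : K%:R * y * c1 rho <= s * c1 rho by rewrite [s * _]mulrC; lra.
rewrite ler_pM2r // => h.
by rewrite ler_pdivlMr // mulrC.
Qed.
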